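(* Let $(W,S)$ be a Coxeter system of finite rank and $S'$ another set of Coxeter generators of $W$ with $S'\subseteq S^W$. Let $A\subseteq S$ be an irreducible simplex, let $A',\bar A'\subseteq S'$ be irreducible simplices, and let $u,\bar u\in W$ satisfy $\langle A\rangle=u\langle A'\rangle u^{-1}=\bar u\langle\bar A'\rangle\bar u^{-1}$. Let $\alpha:(\langle A\rangle,A)\to(\langle A'\rangle,A')$ and $\bar\alpha:(\langle A\rangle,A)\to(\langle\bar A'\rangle,\bar A')$ be isomorphisms. Then $u_*\alpha:\langle A\rangle\to\langle A\rangle$ is an inner-by-graph automorphism of $(\langle A\rangle,A)$ if and only if $\bar u_*\bar\alpha:\langle A\rangle\to\langle A\rangle$ is an inner-by-graph automorphism of $(\langle A\rangle,A)$.
   Context: Coxeter system $(W,S)$: $W=\langle S\mid (st)^{m(s,t)}\ (m(s,t)<\infty)\rangle$, $m(s,s)=1$, $m(s,t)=m(t,s)\in\{2,\dots,\infty\}$. $S^W=\{wsw^{-1}\}$. A simplex is $A\subseteq S$ with all $m(s,t)<\infty$; $A$ is irreducible if the graph on $A$ with edges $m(s,t)\ge3$ is connected. An isomorphism $(\langle A\rangle,A)\to(\langle A'\rangle,A')$ is a group isomorphism mapping $A$ onto $A'$. $u_*$ is $w\mapsto uwu^{-1}$. Inner-by-graph automorphism of $(\langle A\rangle,A)$: composite of an inner automorphism of $\langle A\rangle$ and an automorphism mapping $A$ onto $A$. *)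

(* Defs.v *)
From Stdlib Require Import List Relations.
Set Implicit Arguments.

Record Group := {
  carrier :> Type;
  gmul : carrier -> carrier -> carrier;
  gone : carrier;
  ginv : carrier -> carrier;
  gmulA : forall x y z, gmul x (gmul y z) = gmul (gmul x y) z;
  gmul1l : forall x, gmul gone x = x;
  gmul1r : forall x, gmul x gone = x;
  gmulVl : forall x, gmul (ginv x) x = gone;
  gmulVr : forall x, gmul x (ginv x) = gone
}.

Arguments gmul {g}.
Arguments gone {g}.
Arguments ginv {g}.

Fixpoint gpow {G : Group} (x : G) (n : nat) : G :=
  match n with O => gone | S k => gmul x (gpow x k) end.

Section Defs.
Variable W : Group.

Definition subgroup (H : W -> Prop) : Prop :=
  H gone /\ (forall x y, H x -> H y -> H (gmul x y)) /\ (forall x, H x -> H (ginv x)).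

Definition gen (X : W -> Prop) : W -> Prop :=
  fun w => forall H, subgroup H -> (forall x, X x -> H x) -> H w.

Definition finite_set (X : W -> Prop) : Prop :=
  exists l : list W, forall x, X x <-> In x l.

(* (W,S) is a Coxeter system: S consists of involutions, generates W, and
   W is presented by <S | (st)^n = 1 whenever this holds in W>, i.e. by the
   relations (st)^{m(s,t)} with m(s,t) the order of st (m(s,s)=1).  The
   presentation is expressed through its universal property. *)
Definition coxeter_system (S : W -> Prop) : Prop :=
  (forall s, S s -> s <> gone /\ gmul s s = gone) /\
  (forall w, gen S w) /\
  (forall (G : Group) (f : W -> G),
     (forall s t n, S s -> S t -> gpow (gmul s t) n = gone ->
        gpow (gmul (f s) (f t)) n = gone) ->
     exists phi : W -> G,
       (forall x y, phi (gmul x y) = gmul (phi x) (phi y)) /\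
       (forall s, S s -> phi s = f s)).

Definition reflections (S : W -> Prop) : W -> Prop :=
  fun r => exists w s, S s /\ r = gmul (gmul w s) (ginv w).

Definition finite_order (x : W) : Prop := exists n, 0 < n /\ gpow x n = gone.

Definition simplex (S A : W -> Prop) : Prop :=
  (forall s, A s -> S s) /\
  (forall s t, A s -> A t -> finite_order (gmul s t)).

(* edge s t in the graph on A: m(s,t) >= 3, i.e. (st)^2 <> 1 *)
Definition cox_edge (A : W -> Prop) (s t : W) : Prop :=
  A s /\ A t /\ gpow (gmul s t) 2 <> gone.

Definition irreducible (A : W -> Prop) : Prop :=
  (exists s, A s) /\
  (forall s t, A s -> A t -> clos_refl_trans W (cox_edge A) s t).

(* an isomorphism (<A>,A) -> (<B>,B), given by a function on W whose
   restriction to <A> is a group isomorphism onto <B> mapping A onto B *)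
Definition pair_iso (A B : W -> Prop) (f : W -> W) : Prop :=
  (forall x, gen A x -> gen B (f x)) /\
  (forall x y, gen A x -> gen A y -> f (gmul x y) = gmul (f x) (f y)) /\
  (forall x y, gen A x -> gen A y -> f x = f y -> x = y) /\
  (forall z, gen B z -> exists x, gen A x /\ f x = z) /\
  (forall a, A a -> B (f a)) /\
  (forall b, B b -> exists a, A a /\ f a = b).

Definition conjmap (u : W) : W -> W := fun w => gmul (gmul u w) (ginv u).

Definition conj_gen_eq (A B : W -> Prop) (u : W) : Prop :=
  forall w, gen A w <-> exists v, gen B v /\ w = conjmap u v.

Definition inner_by_graph (A : W -> Prop) (phi : W -> W) : Prop :=
  exists x beta, gen A x /\ pair_iso A A beta /\
    forall w, gen A w -> phi w = conjmap x (beta w).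

End Defs.

Arguments subgroup {W}. Arguments gen {W}. Arguments finite_set {W}.
Arguments coxeter_system {W}. Arguments reflections {W}.
Arguments finite_order {W}. Arguments simplex {W}. Arguments cox_edge {W}.
Arguments irreducible {W}. Arguments pair_iso {W}. Arguments conjmap {W}.
Arguments conj_gen_eq {W}. Arguments inner_by_graph {W}.

(* Main.v *)
Require Import Defs.
From Stdlib Require Import List Relations Classical ClassicalEpsilon FunctionalExtensionality ProofIrrelevance Lia Bool Arith.
Import ListNotations.

Infix "**" := gmul (at level 40, left associativity).

Lemma mulA' {G:Group} (x y z : G) : (x ** y) ** z = x ** (y ** z).
Proof. now rewrite gmulA. Qed.
Lemma mulKl {G:Group} (x y : G) : ginv x ** (x ** y) = y.
Proof. now rewrite gmulA, gmulVl, gmul1l. Qed.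
Lemma mulKr {G:Group} (x y : G) : x ** (ginv x ** y) = y.
Proof. now rewrite gmulA, gmulVr, gmul1l. Qed.
Lemma mul_cancel_l {G:Group} (a x y : G) : a ** x = a ** y -> x = y.
Proof. intro H. rewrite <- (mulKl a x), H. apply mulKl. Qed.
Lemma mul_cancel_r {G:Group} (x y a : G) : x ** a = y ** a -> x = y.
Proof. intro H. rewrite <- (gmul1r _ x), <- (gmulVr _ a), gmulA, H, <- gmulA, gmulVr, gmul1r. reflexivity. Qed.
Lemma inv_unique {G:Group} (x y : G) : x ** y = gone -> ginv x = y.
Proof. intro H. rewrite <- (gmul1r _ (ginv x)), <- H. apply mulKl. Qed.
Lemma inv_mul {G:Group} (x y : G) : ginv (x ** y) = ginv y ** ginv x.
Proof. apply inv_unique. rewrite mulA', mulKr. apply gmulVr. Qed.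
Lemma inv_inv {G:Group} (x : G) : ginv (ginv x) = x.
Proof. apply inv_unique. apply gmulVl. Qed.
Lemma inv_one {G:Group} : ginv (@gone G) = gone.
Proof. apply inv_unique. apply gmul1l. Qed.
Lemma mulKl' {G:Group} (x y : G) : x ** (x ** y) = y -> True. Proof. auto. Qed.

Ltac gnorm := repeat progress rewrite ?mulA', ?gmul1l, ?gmul1r, ?mulKl, ?mulKr, ?gmulVl, ?gmulVr, ?inv_mul, ?inv_inv, ?inv_one.

Lemma invol_inv {G:Group} (s : G) : s ** s = gone -> ginv s = s.
Proof. apply inv_unique. Qed.
Lemma invol_K {G:Group} (s y : G) : s ** s = gone -> s ** (s ** y) = y.
Proof. intro H. now rewrite gmulA, H, gmul1l. Qed.

Fixpoint prod {W:Group} (L : list W) : W :=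
  match L with [] => gone | a :: L => a ** prod L end.

Lemma prod_app {W:Group} (L M : list W) : prod (L ++ M) = prod L ** prod M.
Proof. induction L; simpl; gnorm; [reflexivity|]. now rewrite IHL. Qed.

Definition invol {W:Group} (X : W -> Prop) := forall s, X s -> s ** s = gone.

Lemma prod_rev_inv {W:Group} (X : W -> Prop) L : invol X -> Forall X L ->
  ginv (prod L) = prod (rev L).
Proof.
  intros HX HL; induction HL; simpl. apply inv_one.
  rewrite prod_app, inv_mul, IHHL, invol_inv by auto. simpl. now gnorm.
Qed.

Lemma gen_incl {W:Group} (X : W -> Prop) x : X x -> gen X x.
Proof. intros Hx H HH HX; auto. Qed.
Lemma gen_one {W:Group} (X : W -> Prop) : gen X gone.
Proof. intros H [? _] _; auto. Qed.
Lemma gen_mul {W:Group} (X : W -> Prop) x y : gen X x -> gen X y -> gen X (x ** y).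
Proof. intros Hx Hy H HH HX. destruct HH as (?&?&?). apply H1; [apply Hx|apply Hy]; repeat split; auto. Qed.
Lemma gen_inv {W:Group} (X : W -> Prop) x : gen X x -> gen X (ginv x).
Proof. intros Hx H HH HX. destruct HH as (?&?&?). apply H2; apply Hx; repeat split; auto. Qed.
Lemma gen_ind {W:Group} (X H : W -> Prop) x : subgroup H -> (forall y, X y -> H y) -> gen X x -> H x.
Proof. intros; apply H2; auto. Qed.
Lemma gen_conj {W:Group} (X : W -> Prop) a x : gen X a -> gen X x -> gen X (a ** (x ** ginv a)).
Proof. intros. apply gen_mul; auto. apply gen_mul; auto. apply gen_inv; auto. Qed.

Lemma word_gen {W:Group} (X : W -> Prop) L : Forall X L -> gen X (prod L).
Proof. induction 1; simpl. apply gen_one. apply gen_mul; auto. now apply gen_incl. Qed.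

Lemma gen_word {W:Group} (X : W -> Prop) w : invol X -> gen X w ->
  exists L, Forall X L /\ prod L = w.
Proof.
  intros HX Hw. apply (gen_ind X (fun w => exists L, Forall X L /\ prod L = w)); auto.
  - repeat split.
    + exists []; auto.
    + intros x y (L&?&<-) (M&?&<-). exists (L ++ M). split. now apply Forall_app. apply prod_app.
    + intros x (L&?&<-). exists (rev L). split. now apply Forall_rev. symmetry. now apply (prod_rev_inv X).
  - intros y Hy. exists [y]. split; auto. simpl. now gnorm.
Qed.

Ltac gn := repeat progress (gnorm;
  repeat match goal with
  | H : ?s ** ?s = gone |- context [?s ** (?s ** ?y)] => rewrite (invol_K s y H)
  | H : ?s ** ?s = gone |- context [?s ** ?s] => rewrite H
  end).
Ltac gnH E := repeat progress (rewrite ?mulA', ?gmul1l, ?gmul1r, ?mulKl, ?mulKr, ?gmulVl, ?gmulVr, ?inv_mul, ?inv_inv, ?inv_one in E;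
  repeat match goal with
  | H : ?s ** ?s = gone |- _ => match type of E with context [?s ** (?s ** ?y)] => rewrite (invol_K s y H) in E end
  | H : ?s ** ?s = gone |- _ => match type of E with context [?s ** ?s] => rewrite H in E end
  end).

Definition deq {W:Group} (x y : W) : bool :=
  if excluded_middle_informative (x = y) then true else false.
Lemma deq_true {W:Group} (x y : W) : deq x y = true <-> x = y.
Proof. unfold deq; destruct excluded_middle_informative; split; congruence. Qed.
Lemma deq_iff {W:Group} (x y x' y' : W) : (x = y <-> x' = y') -> deq x y = deq x' y'.
Proof. intro H. unfold deq; do 2 destruct excluded_middle_informative; tauto. Qed.
Lemma deq_refl {W:Group} (x : W) : deq x x = true.
Proof. now apply deq_true. Qed.

Fixpoint par {W:Group} (L : list W) (r : W) : bool :=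
  match L with [] => false | a :: L => xorb (deq a r) (par L (a ** (r ** a))) end.

Definition pif {W:Group} (s : W) (p : W * bool) : W * bool :=
  (s ** (fst p ** s), xorb (snd p) (deq s (fst p))).
Definition pig {W:Group} (s : W) (p : W * bool) : W * bool :=
  (ginv s ** (fst p ** ginv s), xorb (snd p) (deq s (ginv s ** (fst p ** ginv s)))).

Fixpoint piL {W:Group} (L : list W) (p : W * bool) : W * bool :=
  match L with [] => p | a :: L => pif a (piL L p) end.

Lemma piL_formula {W:Group} (X : W -> Prop) L r e : invol X -> Forall X L ->
  piL L (r, e) = (prod L ** (r ** ginv (prod L)),
                  xorb e (par L (prod L ** (r ** ginv (prod L))))).
Proof.
  intros HX HL. induction HL as [|a L Ha HL IH]; simpl.
  - gnorm. now rewrite xorb_false_r.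
  - rewrite IH. unfold pif; simpl. f_equal.
    + gnorm. rewrite (invol_inv a) by auto. reflexivity.
    + gnorm. rewrite (invol_inv a) by auto.
      set (y := prod L ** (r ** ginv (prod L))).
      rewrite (invol_K a) by auto.
      replace (prod L ** (r ** (ginv (prod L) ** a))) with (y ** a) by (unfold y; now gnorm).
      rewrite (deq_iff a (a ** (y ** a)) a y).
      * destruct e, (par L y), (deq a y); reflexivity.
      * split; intro E.
        -- assert (E' : a ** gone = a ** (y ** a)) by (now gnorm).
           apply mul_cancel_l in E'. apply (mul_cancel_r _ _ a). rewrite <- E'. auto.
        -- rewrite <- E. now rewrite (HX a Ha), gmul1r.
Qed.

Record perm (T : Type) := Perm { pf : T -> T; pg : T -> T;
  pfg : forall x, pf (pg x) = x; pgf : forall x, pg (pf x) = x }.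
Arguments pf {T}. Arguments pg {T}. Arguments pfg {T}. Arguments pgf {T}.

Lemma perm_eq {T} (p q : perm T) : pf p = pf q -> pg p = pg q -> p = q.
Proof.
  destruct p, q; simpl; intros; subst. f_equal; apply proof_irrelevance.
Qed.

Definition pmul {T} (p q : perm T) : perm T.
Proof.
  refine (Perm _ (fun x => pf p (pf q x)) (fun x => pg q (pg p x)) _ _);
  intros; rewrite ?pfg, ?pgf; rewrite ?pfg, ?pgf; auto.
Defined.
Definition pone T : perm T := Perm T (fun x => x) (fun x => x) (fun _ => eq_refl) (fun _ => eq_refl).
Definition pinv {T} (p : perm T) : perm T := Perm T (pg p) (pf p) (pgf p) (pfg p).

Definition PermGroup (T : Type) : Group.
Proof.
  refine (@Build_Group (perm T) pmul (pone T) pinv _ _ _ _ _);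
  intros; apply perm_eq; simpl; apply functional_extensionality; intros;
  rewrite ?pfg, ?pgf; auto.
Defined.

Definition piperm {W:Group} (s : W) : perm (W * bool).
Proof.
  refine (Perm _ (pif s) (pig s) _ _); intros [r e]; unfold pif, pig; simpl; f_equal.
  - now gnorm.
  - gnorm. destruct e, (deq s (ginv s ** (r ** ginv s))); reflexivity.
  - now gnorm.
  - gnorm. destruct e, (deq s r); reflexivity.
Defined.

Fixpoint xsum (g : nat -> bool) (n : nat) : bool :=
  match n with 0 => false | S k => xorb (g 0) (xsum (fun i => g (S i)) k) end.

Lemma xsum_ext g h n : (forall i, g i = h i) -> xsum g n = xsum h n.
Proof. revert g h; induction n; simpl; intros; auto. rewrite H. f_equal. apply IHn; auto. Qed.

Lemma xsum_add g a b : xsum g (a + b) = xorb (xsum g a) (xsum (fun i => g (a + i)) b).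
Proof.
  revert g; induction a; simpl; intros.
  - apply xsum_ext. auto.
  - rewrite IHa, xorb_assoc. reflexivity.
Qed.

Lemma gpow_add {G:Group} (x : G) a b : gpow x (a + b) = gpow x a ** gpow x b.
Proof. induction a; simpl. now gnorm. rewrite IHa. now gnorm. Qed.
Lemma gpow_comm {G:Group} (x : G) a : gpow x a ** x = x ** gpow x a.
Proof.
  replace (x ** gpow x a) with (gpow x (1 + a)) by (simpl; reflexivity).
  rewrite Nat.add_comm, gpow_add. simpl. now rewrite gmul1r.
Qed.

Fixpoint alt {W:Group} (s t : W) n : list W :=
  match n with 0 => [] | S k => s :: t :: alt s t k end.

Lemma prod_alt {W:Group} (s t : W) n : prod (alt s t n) = gpow (s ** t) n.
Proof. induction n; simpl; auto. rewrite IHn. now gnorm. Qed.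

Lemma par_alt {W:Group} (s t : W) n r : s ** s = gone -> t ** t = gone ->
  par (alt s t n) r = xsum (fun i => deq (gpow (s ** t) i ** s) r) (n + n).
Proof.
  intros Hs Ht. revert r; induction n; intros r; simpl; auto.
  rewrite Nat.add_succ_r. simpl. f_equal.
  - apply deq_iff. gnorm. tauto.
  - f_equal.
    + apply deq_iff. gn. split; intro E.
      * rewrite E. gn. reflexivity.
      * rewrite <- E. gn. reflexivity.
    + rewrite IHn. apply xsum_ext. intro i. apply deq_iff.
      simpl. set (X := gpow (s ** t) i).
      assert (C : X ** (s ** t) = s ** (t ** X)) by (unfold X; rewrite gpow_comm; now gnorm).
      assert (C' : forall y, X ** (s ** (t ** y)) = s ** (t ** (X ** y))).
      { intro y. rewrite <- (mulA' X s), <- (mulA' (X ** s) t y), (mulA' X s t), C. now gnorm. }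
      split; intro E.
      * gn. rewrite <- (C' s). rewrite <- (mulA' X s), E. gn. reflexivity.
      * rewrite <- E. gn. rewrite <- (C' t). gn. reflexivity.
Qed.

Lemma pf_gpow_alt {W:Group} (s t : W) n :
  pf (@gpow (PermGroup (W * bool)) (@gmul (PermGroup (W*bool)) (piperm s) (piperm t)) n) = piL (alt s t n).
Proof.
  induction n; simpl; auto. apply functional_extensionality; intro x. do 2 f_equal. exact (f_equal (fun f => f x) IHn).
Qed.

Lemma perm_one {T} (p : perm T) : pf p = (fun x => x) -> p = pone T.
Proof.
  intro H. apply perm_eq; auto. simpl. apply functional_extensionality. intro x.
  rewrite <- (pfg p x) at 2. rewrite H. reflexivity.
Qed.

Lemma cox_invol {W:Group} (S : W -> Prop) : coxeter_system S -> invol S.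
Proof. intros [H _] s Hs. apply H, Hs. Qed.

Lemma tits_hom {W:Group} (S : W -> Prop) : coxeter_system S ->
  exists phi : W -> PermGroup (W * bool), forall L, Forall S L -> pf (phi (prod L)) = piL L.
Proof.
  intros HS. pose proof (cox_invol S HS) as HI. destruct HS as (H1 & H2 & H3).
  destruct (H3 (PermGroup (W * bool)) (fun s => piperm s)) as (phi & Hm & Hs).
  - intros s t n Hs Ht Hn. apply perm_one. rewrite pf_gpow_alt.
    apply functional_extensionality. intros [r e].
    rewrite (piL_formula S) by (auto; clear -Hs Ht; induction n; simpl; auto).
    rewrite prod_alt, Hn. gnorm. rewrite (par_alt s t n r) by auto.
    rewrite xsum_add. rewrite (xsum_ext (fun i => deq (gpow (s ** t) (n + i) ** s) r)
       (fun i => deq (gpow (s ** t) i ** s) r)).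
    + rewrite xorb_nilpotent, xorb_false_r. reflexivity.
    + intro i. rewrite gpow_add, Hn, gmul1l. reflexivity.
  - exists phi. assert (P1 : phi gone = gone).
    { apply (mul_cancel_l (phi gone)). rewrite <- Hm. rewrite !gmul1r. reflexivity. }
    induction 1; simpl.
    + rewrite P1. reflexivity.
    + rewrite Hm, Hs by auto. simpl. rewrite IHForall. reflexivity.
Qed.

Lemma par_wd {W:Group} (S : W -> Prop) : coxeter_system S ->
  forall L M, Forall S L -> Forall S M -> prod L = prod M -> forall r, par L r = par M r.
Proof.
  intros HS L M HL HM E r. pose proof (cox_invol S HS) as HI.
  destruct (tits_hom S HS) as (phi & Hphi).
  assert (E2 : piL L = piL M) by (rewrite <- Hphi, <- Hphi, E by auto; reflexivity).
  set (w := prod L).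
  assert (F := f_equal (fun f => snd (f (ginv w ** (r ** w), false))) E2). simpl in F.
  rewrite (piL_formula S L), (piL_formula S M) in F by auto. simpl in F.
  rewrite <- E in F. fold w in F. gnH F. exact F.
Qed.

Lemma par_true_split {W:Group} (X : W -> Prop) L r : invol X -> Forall X L -> par L r = true ->
  exists L1 a L2, L = L1 ++ a :: L2 /\ r ** prod L = prod (L1 ++ L2).
Proof.
  intros HX HL. revert r. induction HL as [|a L Ha HL IH]; simpl; intros r Hp; [discriminate|].
  destruct (deq a r) eqn:D.
  - apply deq_true in D. subst. exists [], r, L. split; auto. simpl. rewrite gmulA, (HX r Ha). now gnorm.
  - simpl in Hp. destruct (IH _ Hp) as (L1 & b & L2 & -> & E).
    exists (a :: L1), b, L2. split; auto. simpl. rewrite <- E. pose proof (HX a Ha). gn. reflexivity.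
Qed.

Definition reduced {W:Group} (S : W -> Prop) (L : list W) :=
  Forall S L /\ forall M, Forall S M -> prod M = prod L -> length L <= length M.

Lemma exch {W:Group} (S : W -> Prop) L s M : coxeter_system S -> reduced S L -> S s ->
  Forall S M -> prod M = s ** prod L -> length M <= length L ->
  exists L1 a L2, L = L1 ++ a :: L2 /\ s ** prod L = prod (L1 ++ L2).
Proof.
  intros HS [HL HR] Hs HM EM Hlen. pose proof (cox_invol S HS) as HI.
  destruct (par L s) eqn:P.
  - eapply par_true_split; eauto.
  - exfalso. assert (P2 : par (s :: L) s = true).
    { simpl. rewrite deq_refl. pose proof (HI s Hs). rewrite (invol_K s s) by auto. now rewrite P. }
    rewrite (par_wd S HS (s :: L) M) in P2 by (auto; simpl; auto).
    destruct (par_true_split S M s HI HM P2) as (M1 & b & M2 & EM' & E).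
    rewrite EM, (invol_K s) in E by auto.
    specialize (HR (M1 ++ M2)).
    assert (Forall S (M1 ++ M2)).
    { subst M. apply Forall_app in HM as [? HM2]. inversion HM2. apply Forall_app; auto. }
    specialize (HR H (eq_sym E)). subst M. rewrite !length_app in *. simpl in *. lia.
Qed.

Lemma Forall_sub {W:Group} (J S : W -> Prop) L : (forall x, J x -> S x) -> Forall J L -> Forall S L.
Proof. intros H HL. eapply Forall_impl; eauto. Qed.

Lemma F1 {W:Group} (S J : W -> Prop) : coxeter_system S -> (forall x, J x -> S x) ->
  forall n L, length L <= n -> Forall J L ->
  exists L', Forall J L' /\ reduced S L' /\ prod L' = prod L.
Proof.
  intros HS HJ n. induction n; intros L Hl HL.
  - destruct L; simpl in Hl; [|lia]. exists []. repeat split; auto. intros; simpl; lia.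
  - destruct L as [|a L0].
    + exists []. repeat split; auto. intros; simpl; lia.
    + inversion HL; subst. simpl in Hl.
      destruct (IHn L0) as (L0' & HJ0 & HR0 & E0); auto; try lia.
      assert (Hle : length L0' <= length L0) by (apply HR0; auto; eapply Forall_sub; eauto).
      destruct (classic (exists M, Forall S M /\ prod M = a ** prod L0' /\ length M <= length L0')) as [(M & HM & EM & LM)|NM].
      * destruct (exch S L0' a M HS HR0 (HJ a H1) HM EM LM) as (P1 & b & P2 & EP & E2).
        subst L0'. apply Forall_app in HJ0 as [HJ1 HJ2]. inversion HJ2; subst.
        destruct (IHn (P1 ++ P2)) as (L' & ? & ? & E'); [rewrite length_app in *; simpl in *; lia| apply Forall_app; auto|].
        exists L'. split; [auto|split; [auto|]]. rewrite E'. simpl. rewrite <- E2, E0. reflexivity.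
      * exists (a :: L0'). repeat split; auto.
        -- constructor; auto. apply HR0.
        -- intros M HM EM. simpl in *. destruct (le_lt_dec (Datatypes.S (length L0')) (length M)); auto.
           exfalso. apply NM. exists M. repeat split; auto. lia.
        -- simpl. rewrite E0. reflexivity.
Qed.

Lemma F1g {W:Group} (S J : W -> Prop) x : coxeter_system S -> (forall x, J x -> S x) -> gen J x ->
  exists L', Forall J L' /\ reduced S L' /\ prod L' = x.
Proof.
  intros HS HJ Hx. destruct (gen_word J x) as (L & HL & <-); auto.
  - intros s Hs. apply (cox_invol S HS), HJ, Hs.
  - eapply (F1 S J HS HJ (length L)); auto.
Qed.

Lemma nat_min (P : nat -> Prop) : (exists n, P n) -> exists n, P n /\ forall m, P m -> n <= m.
Proof.
  intros [n Hn]. revert Hn. induction n using lt_wf_ind; intros Hn.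
  destruct (classic (exists m, P m /\ m < n)) as [(m & Hm & Lm)|N].
  - eapply H; eauto.
  - exists n. split; auto. intros m Hm. destruct (le_lt_dec n m); auto. exfalso; eauto.
Qed.

Lemma min_rep {W:Group} (S J : W -> Prop) w : coxeter_system S ->
  exists L1, reduced S L1 /\ gen J (prod L1 ** ginv w) /\
    forall M, Forall S M -> gen J (prod M ** ginv w) -> length L1 <= length M.
Proof.
  intros HS. pose proof (cox_invol S HS) as HI.
  destruct (nat_min (fun n => exists L, Forall S L /\ gen J (prod L ** ginv w) /\ length L = n)) as (n & (L1 & HL1 & G1 & <-) & Hm).
  - destruct HS as (_ & Hg & _). destruct (gen_word S w HI (Hg w)) as (L & HL & E).
    exists (length L), L. repeat split; auto. rewrite E, gmulVr. apply gen_one.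
  - exists L1. split; [split; [auto|]|split; [auto|]].
    + intros M HM EM. apply Hm. exists M. rewrite EM. auto.
    + intros M HM GM. apply Hm. eauto.
Qed.

Lemma reduced_tail {W:Group} (S : W -> Prop) a X : reduced S (a :: X) -> reduced S X.
Proof.
  intros [HF HR]. inversion HF; subst. split; auto. intros M HM EM.
  specialize (HR (a :: M)). simpl in HR. rewrite EM in HR. specialize (HR (Forall_cons _ H1 HM) eq_refl). lia.
Qed.

Lemma split_lemma {T} (X L1 P1 P2 : list T) b : X ++ L1 = P1 ++ b :: P2 ->
  (exists l', X = P1 ++ b :: l' /\ P2 = l' ++ L1) \/ (exists l, L1 = l ++ b :: P2 /\ P1 = X ++ l).
Proof.
  intro E. destruct (app_eq_app X L1 P1 (b :: P2) E) as (l & [[E1 E2]|[E1 E2]]).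
  - destruct l as [|c l].
    + right. exists []. simpl in *. rewrite app_nil_r in *. subst. split; auto.
    + left. simpl in E2. inversion E2; subst. exists l. auto.
  - right. exists l. auto.
Qed.

Lemma F2 {W:Group} (S J : W -> Prop) w L1 : coxeter_system S -> (forall x, J x -> S x) ->
  reduced S L1 -> gen J (prod L1 ** ginv w) ->
  (forall M, Forall S M -> gen J (prod M ** ginv w) -> length L1 <= length M) ->
  forall X, Forall J X -> reduced S X -> reduced S (X ++ L1).
Proof.
  intros HS HJ HR1 HG1 Hmin X HX. induction HX as [|a X' Ha HX' IH]; intros HRX; simpl; auto.
  pose proof (reduced_tail S a X' HRX) as HR'. specialize (IH HR').
  split. { constructor. apply HJ, Ha. apply IH. }
  intros M HM EM. simpl in EM. simpl.
  destruct (le_lt_dec (Datatypes.S (length (X' ++ L1))) (length M)) as [|Lt]; auto. exfalso.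
  destruct (exch S (X' ++ L1) a M HS IH (HJ a Ha) HM EM) as (P1 & b & P2 & E1 & E2); [lia|].
  destruct (split_lemma X' L1 P1 P2 b E1) as [(l' & -> & ->)|(l & -> & ->)].
  - replace (P1 ++ l' ++ L1) with ((P1 ++ l') ++ L1) in E2 by (now rewrite app_assoc). rewrite !(prod_app _ L1) in E2. rewrite <- mulA' in E2. apply mul_cancel_r in E2.
    destruct HRX as [HFX HRX]. specialize (HRX (P1 ++ l')).
    apply Forall_app in HX' as [HX1 HX2]. inversion HX2; subst.
    assert (Forall S (P1 ++ l')) by (apply Forall_app; split; eapply Forall_sub; eauto).
    specialize (HRX H (eq_sym E2)). simpl in HRX. rewrite !length_app in HRX. simpl in HRX. lia.
  - rewrite <- app_assoc, !prod_app in E2.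
    assert (E3 : prod (l ++ P2) = ginv (prod X') ** (a ** (prod X' ** prod (l ++ b :: P2)))).
    { rewrite !prod_app, <- (mulKl (prod X') (prod l ** prod P2)), <- E2. now gnorm. }
    destruct HR1 as [HF1 _]. apply Forall_app in HF1 as [HF1 HF2]. inversion HF2; subst.
    specialize (Hmin (l ++ P2)).
    assert (Forall S (l ++ P2)) by (apply Forall_app; auto).
    assert (gen J (prod (l ++ P2) ** ginv w)).
    { rewrite E3. replace (ginv (prod X') ** (a ** (prod X' ** prod (l ++ b :: P2))) ** ginv w)
        with ((ginv (prod X') ** (a ** ginv (ginv (prod X')))) ** (prod (l ++ b :: P2) ** ginv w)) by (now gnorm).
      apply gen_mul; auto. apply gen_conj. apply gen_inv. apply word_gen; auto. now apply gen_incl. }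
    specialize (Hmin H H0). rewrite !length_app in Hmin. simpl in Hmin. lia.
Qed.

Lemma parab_conj {W:Group} (S I J : W -> Prop) w : coxeter_system S ->
  (forall x, I x -> S x) -> (forall x, J x -> S x) ->
  (forall v, gen I v -> gen J (w ** (v ** ginv w))) ->
  (forall z, gen J z -> exists v, gen I v /\ z = w ** (v ** ginv w)) ->
  exists c, gen J c /\ (forall s, I s -> J ((c ** w) ** (s ** ginv (c ** w)))) /\
    (forall b, J b -> exists s, I s /\ b = (c ** w) ** (s ** ginv (c ** w))).
Proof.
  intros HS HI HJ C1 C2. pose proof (cox_invol S HS) as HV.
  assert (Hne : forall s, S s -> s <> gone) by (intros s Hs; destruct HS as [H0 _]; apply (H0 s Hs)).
  destruct (min_rep S J w HS) as (L1 & HR1 & HG1 & Hmin).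
  set (w1 := prod L1) in *. set (c := w1 ** ginv w).
  exists c. replace (c ** w) with w1 by (unfold c; now gnorm).
  assert (K1 : forall v, gen I v -> gen J (w1 ** (v ** ginv w1))).
  { intros v Hv. replace (w1 ** (v ** ginv w1)) with (c ** ((w ** (v ** ginv w)) ** ginv c)) by (unfold c; now gnorm).
    apply gen_conj; auto. }
  assert (K2 : forall z, gen J z -> exists v, gen I v /\ z = w1 ** (v ** ginv w1)).
  { intros z Hz. destruct (C2 (ginv c ** (z ** ginv (ginv c)))) as (v & Hv & E).
    - apply gen_conj; auto. apply gen_inv; auto.
    - exists v. split; auto. apply (mul_cancel_l (ginv c)). apply (mul_cancel_r _ _ c).
      rewrite inv_inv in E. rewrite !mulA', E. unfold c. now gnorm. }
  assert (P1 : forall s, I s -> J (w1 ** (s ** ginv w1))).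
  { intros s Hs. set (t := w1 ** (s ** ginv w1)).
    assert (Gt : gen J t) by (apply K1, gen_incl, Hs).
    destruct (F1g S J t HS HJ Gt) as (T & HT & HRT & ET).
    pose proof (F2 S J w L1 HS HJ HR1 HG1 Hmin T HT HRT) as HR.
    destruct HR as [_ HR]. specialize (HR (L1 ++ [s])).
    assert (FL : Forall S (L1 ++ [s])) by (apply Forall_app; split; [apply HR1|constructor; auto]).
    specialize (HR FL). rewrite !prod_app, ET in HR. simpl in HR. fold w1 in HR.
    assert (E : w1 ** (s ** gone) = t ** w1) by (unfold t; now gnorm).
    specialize (HR E). rewrite !length_app in HR. simpl in HR.
    destruct T as [|a [|a' T]]; simpl in HR; try lia.
    - exfalso. simpl in ET. apply (Hne s (HI s Hs)).
      replace s with (ginv w1 ** (t ** w1)) by (unfold t; now gnorm). rewrite <- ET. now gnorm.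
    - simpl in ET. rewrite gmul1r in ET. rewrite <- ET. inversion HT; auto. }
  split; [exact HG1|]. split; auto.
  intros b Hb. set (J0 := fun y => exists s, I s /\ y = w1 ** (s ** ginv w1)).
  assert (HJ0 : forall y, J0 y -> S y) by (intros y (s & Hs & ->); apply HJ, P1, Hs).
  destruct (K2 b (gen_incl J b Hb)) as (v & Hv & Eb).
  assert (G0 : gen J0 b).
  { rewrite Eb. apply (gen_ind I (fun v => gen J0 (w1 ** (v ** ginv w1)))); auto.
    - split; [|split].
      + gnorm. apply gen_one.
      + intros x y Hx Hy. replace (w1 ** (x ** y ** ginv w1)) with
          ((w1 ** (x ** ginv w1)) ** (w1 ** (y ** ginv w1))) by (now gnorm). apply gen_mul; auto.
      + intros x Hx. replace (w1 ** (ginv x ** ginv w1)) with (ginv (w1 ** (x ** ginv w1))) by (now gnorm).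
        apply gen_inv; auto.
    - intros y Hy. apply gen_incl. exists y; auto. }
  destruct (F1g S J0 b HS HJ0 G0) as (T & HT & HRT & ET).
  destruct HRT as [_ HRT]. specialize (HRT [b]).
  assert (Hbs : S b) by auto.
  assert (E : prod [b] = prod T) by (simpl; rewrite ET; now gnorm).
  specialize (HRT (Forall_cons _ Hbs (Forall_nil _)) E). simpl in HRT.
  destruct T as [|a [|a' T]]; simpl in HRT; try lia.
  - simpl in ET. exfalso. apply (Hne b Hbs). auto.
  - simpl in ET. rewrite gmul1r in ET. inversion HT as [|? ? HJa]; subst. destruct HJa as (s & Hs & Es). exists s. split; auto.
Qed.

Lemma conj_inv_eq {W:Group} (a v b v' : W) : (a ** v) ** ginv a = (b ** v') ** ginv b ->
  v' = ginv b ** (a ** (v ** (ginv a ** b))).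
Proof.
  intro H. replace (a ** (v ** (ginv a ** b))) with (((a ** v) ** ginv a) ** b) by (now gnorm).
  rewrite H. now gnorm.
Qed.

Lemma one_dir {W:Group} (S' A A' Ab' : W -> Prop) (u ub : W) (alpha alphab : W -> W) :
  coxeter_system S' -> (forall x, A' x -> S' x) -> (forall x, Ab' x -> S' x) ->
  conj_gen_eq A A' u -> conj_gen_eq A Ab' ub ->
  pair_iso A A' alpha -> pair_iso A Ab' alphab ->
  inner_by_graph A (fun w => conjmap u (alpha w)) ->
  inner_by_graph A (fun w => conjmap ub (alphab w)).
Proof.
  intros HS HA' HAb' CA CB [a1 [a2 [a3 [a4 [a5 a6]]]]] [b1 [b2 [b3 [b4 [b5 b6]]]]] (x & beta & Hx & Hbeta & Hxb).
  destruct Hbeta as [c1 [c2 [c3 [c4 [c5 c6]]]]].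
  set (w0 := ginv ub ** u).
  destruct (parab_conj S' A' Ab' w0 HS HA' HAb') as (c & Hc & Q1 & Q2).
  - intros v Hv. assert (G : gen A (conjmap u v)) by (apply (proj2 (CA _)); eauto).
    destruct (proj1 (CB _) G) as (v' & Hv' & Ev). unfold conjmap in Ev.
    apply conj_inv_eq in Ev. unfold w0. gnorm. rewrite <- Ev. exact Hv'.
  - intros z Hz. assert (G : gen A (conjmap ub z)) by (apply (proj2 (CB _)); eauto).
    destruct (proj1 (CA _) G) as (v & Hv & Ev). unfold conjmap in Ev.
    apply conj_inv_eq in Ev. exists v. split; auto. unfold w0. rewrite Ev. now gnorm.
  - set (w1 := c ** w0) in *.
    set (y := ub ** (c ** (ginv ub ** x))).
    assert (Gy : gen A y).
    { replace y with (conjmap ub c ** x) by (unfold y, conjmap; now gnorm).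
      apply gen_mul; auto. apply (proj2 (CB _)); eauto. }
    assert (Key : forall a, A a -> ginv y ** (conjmap ub (w1 ** (alpha a ** ginv w1)) ** y) = beta a).
    { intros a Ha. pose proof (Hxb a (gen_incl _ _ Ha)) as E. unfold conjmap in E.
      apply conj_inv_eq in E. rewrite E. unfold conjmap, y, w1, w0. now gnorm. }
    exists y, (fun w => ginv y ** (conjmap ub (alphab w) ** y)). split; [auto|split].
    + split; [|split; [|split; [|split; [|split]]]]; cbv beta.
      * intros w Hw. replace (ginv y ** (conjmap ub (alphab w) ** y)) with
          (ginv y ** (conjmap ub (alphab w) ** ginv (ginv y))) by (now rewrite inv_inv).
        apply gen_conj; [apply gen_inv; auto|]. apply (proj2 (CB _)); eauto.
      * intros w1' w2' H1 H2. rewrite b2 by auto. unfold conjmap. now gnorm.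
      * intros w1' w2' H1 H2 E. apply b3; auto.
        pose proof (f_equal (fun z => ginv ub ** (y ** (z ** (ginv y ** ub)))) E) as E'.
        cbv beta in E'. unfold conjmap in E'. gnH E'. exact E'.
      * intros z Hz. assert (G : gen A (y ** (z ** ginv y))) by (apply gen_conj; auto).
        destruct (proj1 (CB _) G) as (v & Hv & Ev).
        destruct (b4 v Hv) as (x' & Hx' & <-). exists x'. split; auto.
        rewrite <- Ev. now gnorm.
      * intros a Ha. destruct (Q2 _ (b5 a Ha)) as (s & Hs & Es).
        destruct (a6 s Hs) as (a'' & Ha'' & <-). rewrite Es, Key by auto. auto.
      * intros b0 Hb0. destruct (c6 b0 Hb0) as (a'' & Ha'' & <-).
        destruct (b6 _ (Q1 _ (a5 a'' Ha''))) as (a & Ha & Ea).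
        exists a. split; auto. rewrite Ea. apply Key; auto.
    + intros w Hw. unfold conjmap. now gnorm.
Qed.

Theorem lemma7p7 (W : Group) (S S' A A' Ab' : W -> Prop) (u ub : W)
    (alpha alphab : W -> W) :
  coxeter_system S -> finite_set S ->
  coxeter_system S' ->
  (forall s, S' s -> reflections S s) ->
  simplex S A -> irreducible A ->
  simplex S' A' -> irreducible A' ->
  simplex S' Ab' -> irreducible Ab' ->
  conj_gen_eq A A' u -> conj_gen_eq A Ab' ub ->
  pair_iso A A' alpha -> pair_iso A Ab' alphab ->
  (inner_by_graph A (fun w => conjmap u (alpha w)) <->
   inner_by_graph A (fun w => conjmap ub (alphab w))).
Proof.
  intros _ _ HS' _ _ _ [HA' _] _ [HAb' _] _ CA CB Ha Hb.
  split; intro H.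
  - exact (one_dir S' A A' Ab' u ub alpha alphab HS' HA' HAb' CA CB Ha Hb H).
  - exact (one_dir S' A Ab' A' ub u alphab alpha HS' HAb' HA' CB CA Hb Ha H).
Qed.
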